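(* Fix a conic $\mathcal H$ containing points $A, B, C$, and a line $\ell$ containing a point $D$. For a point $E$ varying on $\mathcal H$, let the conic $\mathcal E$ through $A,B,C,D,E$ meet $\ell$ at $F \neq D$. Then line $EF$ passes through a fixed point $G$ on $\mathcal H$ (independent of $E$). *)

(* Defs.v *)
(* Points: nonzero row vectors in R^3 (homogeneous coordinates). *)
From HB Require Import structures.
From mathcomp Require Import all_boot all_order all_algebra.
From mathcomp Require Import reals.

Set Implicit Arguments.
Unset Strict Implicit.
Unset Printing Implicit Defensive.

Import GRing.Theory Num.Theory.
Local Open Scope ring_scope.

Section Proj.
Variable R : fieldType.

Definition qform (M : 'M[R]_3) (x : 'rV[R]_3) : R := (x *m M *m x^T) 0 0.

Definition is_conic (M : 'M[R]_3) : Prop := M^T = M /\ M != 0.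

Definition nondeg_conic (M : 'M[R]_3) : Prop := is_conic M /\ \det M != 0.

Definition on_conic (M : 'M[R]_3) (x : 'rV[R]_3) : Prop := qform M x = 0.

Definition on_line (l x : 'rV[R]_3) : Prop := (x *m l^T) 0 0 = 0.

Definition proj_eq (x y : 'rV[R]_3) : Prop := exists k : R, k != 0 /\ y = k *: x.

Definition collinear3 (x y z : 'rV[R]_3) : Prop :=
  \det (col_mx x (col_mx y z) : 'M[R]_3) = 0.

End Proj.

(* Main.v *)
Require Import Defs.
From HB Require Import structures.
From mathcomp Require Import all_boot all_order all_algebra.
From mathcomp Require Import reals.
From mathcomp Require Import ring lra.
Set Implicit Arguments. Unset Strict Implicit. Unset Printing Implicit Defensive.
Import Order.TTheory GRing.Theory Num.Theory.
Local Open Scope ring_scope.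

Section S.
Variable R : realType.
Definition i0 : 'I_3 := Ordinal (isT : (0 < 3)%N).
Definition i1 : 'I_3 := Ordinal (isT : (1 < 3)%N).
Definition i2 : 'I_3 := Ordinal (isT : (2 < 3)%N).

Lemma sum3 (F : 'I_3 -> R) : \sum_(i < 3) F i = F i0 + F i1 + F i2.
Proof.
rewrite !big_ord_recl big_ord0 addr0 addrA; congr (F _ + F _ + F _); exact/val_inj.
Qed.

Lemma ord3P (i : 'I_3) : [\/ i = i0, i = i1 | i = i2].
Proof.
case: i => [[|[|[|k]]] Hk]; [constructor 1|constructor 2|constructor 3|by []]; exact/val_inj.
Qed.

Lemma row3P (x y : 'rV[R]_3) : x 0 i0 = y 0 i0 -> x 0 i1 = y 0 i1 -> x 0 i2 = y 0 i2 -> x = y.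
Proof.
move=> h0 h1 h2; apply/rowP => i; case: (ord3P i) => ->; by [].
Qed.

Ltac ordnorm := repeat match goal with
 | |- context [@lift 3 ?a ?b] => let E := fresh in
     first [ have E : @lift 3 a b = i0 by apply/val_inj
           | have E : @lift 3 a b = i1 by apply/val_inj
           | have E : @lift 3 a b = i2 by apply/val_inj ]; rewrite E; clear E end.

Definition mk3 (x y z : 'rV[R]_3) : 'M[R]_3 := col_mx x (col_mx y z).

Lemma det3 (M : 'M[R]_3) : \det M =
  M i0 i0 * (M i1 i1 * M i2 i2 - M i1 i2 * M i2 i1)
  - M i0 i1 * (M i1 i0 * M i2 i2 - M i1 i2 * M i2 i0)
  + M i0 i2 * (M i1 i0 * M i2 i1 - M i1 i1 * M i2 i0).
Proof.
rewrite (expand_det_row _ i0) sum3 /cofactor.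
rewrite !(expand_det_row _ ord0) !big_ord_recl !big_ord0 /cofactor !det_mx11 !mxE /=.
ordnorm. rewrite /bump /=. ring.
Qed.

Definition mkv (a b c : R) : 'rV[R]_3 :=
  \row_(i < 3) (if i == i0 then a else if i == i1 then b else c).
Lemma mkv0 a b c : mkv a b c 0 i0 = a. Proof. by rewrite mxE. Qed.
Lemma mkv1 a b c : mkv a b c 0 i1 = b. Proof. by rewrite mxE. Qed.
Lemma mkv2 a b c : mkv a b c 0 i2 = c. Proof. by rewrite mxE. Qed.
Definition dot (x y : 'rV[R]_3) := x 0 i0 * y 0 i0 + x 0 i1 * y 0 i1 + x 0 i2 * y 0 i2.
Definition crs (x y : 'rV[R]_3) := mkv (x 0 i1 * y 0 i2 - x 0 i2 * y 0 i1)
   (x 0 i2 * y 0 i0 - x 0 i0 * y 0 i2) (x 0 i0 * y 0 i1 - x 0 i1 * y 0 i0).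
Definition hat (x : 'rV[R]_3) := mkv (x 0 i1 * x 0 i2) (x 0 i0 * x 0 i2) (x 0 i0 * x 0 i1).
Definition had (x y : 'rV[R]_3) := mkv (x 0 i0 * y 0 i0) (x 0 i1 * y 0 i1) (x 0 i2 * y 0 i2).
Definition tau (x y : 'rV[R]_3) := mkv (x 0 i1 * y 0 i2 + x 0 i2 * y 0 i1)
   (x 0 i0 * y 0 i2 + x 0 i2 * y 0 i0) (x 0 i0 * y 0 i1 + x 0 i1 * y 0 i0).
Definition D3 (x y z : 'rV[R]_3) := dot x (crs y z).

Ltac ex := rewrite /D3 /dot /crs /hat /had /tau /mkv ?mxE /=.


Lemma Kcomb (w x y : 'rV[R]_3) (a b : R) : dot w (hat (a *: x + b *: y)) =
  a^+2 * dot w (hat x) + a * b * dot w (tau x y) + b^+2 * dot w (hat y).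
Proof. ex; ring. Qed.

Lemma cramer (u v t y : 'rV[R]_3) :
  D3 u v t *: y = D3 y v t *: u + D3 u y t *: v + D3 u v y *: t.
Proof. apply: row3P; ex; ring. Qed.

Lemma D3lin2 (e x y g : 'rV[R]_3) (a b : R) :
  D3 e (a *: x + b *: y) g = a * D3 e x g + b * D3 e y g.
Proof. ex; ring. Qed.

Lemma bac (w u v : 'rV[R]_3) : crs w (crs u v) = (dot w v) *: u - (dot w u) *: v.
Proof. apply: row3P; ex; ring. Qed.

Lemma dotZ (x y : 'rV[R]_3) (k : R) : dot (k *: x) y = k * dot x y.
Proof. ex; ring. Qed.
Lemma dotC (x y : 'rV[R]_3) : dot x y = dot y x.
Proof. ex; ring. Qed.

Lemma dot_pos (x : 'rV[R]_3) : x != 0 -> 0 < dot x x.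
Proof.
move=> hx; rewrite /dot; have [h|h] := boolP (x 0 i0 == 0).
- have [h'|h'] := boolP (x 0 i1 == 0).
  + have h'' : x 0 i2 != 0.
      apply/negP => /eqP h2; move/negP: hx; apply; apply/eqP; apply: row3P;
      by rewrite mxE ?(eqP h) ?(eqP h').
    move/eqP: h => ->; move/eqP: h' => ->; rewrite !mul0r !add0r.
    by rewrite lt0r mulf_neq0 //= -expr2 sqr_ge0.
  + have : 0 < x 0 i1 * x 0 i1 by rewrite lt0r mulf_neq0 //= -expr2 sqr_ge0.
    have := sqr_ge0 (x 0 i0); have := sqr_ge0 (x 0 i2); rewrite !expr2. lra.
- have : 0 < x 0 i0 * x 0 i0 by rewrite lt0r mulf_neq0 //= -expr2 sqr_ge0.
  have := sqr_ge0 (x 0 i1); have := sqr_ge0 (x 0 i2); rewrite !expr2. lra.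
Qed.

Lemma dotDl (x y u : 'rV[R]_3) : dot (x + y) u = dot x u + dot y u.
Proof. ex; ring. Qed.

Lemma dotx0 (x : 'rV[R]_3) : dot x 0 = 0.
Proof. ex; ring. Qed.

Lemma line_contra (d l f w : 'rV[R]_3) : d != 0 -> l != 0 -> dot l d = 0 ->
  (forall x, x != 0 -> dot w (hat x) = 0 -> dot l x = 0 -> proj_eq d x \/ proj_eq f x) ->
  (forall x, dot l x = 0 -> dot w (hat x) = 0) -> False.
Proof.
move=> d0 l0 ld uniq full.
set z := crs l d.
have zd : dot z d = 0 by rewrite /z; ex; ring.
have zl : dot l z = 0 by rewrite /z; ex; ring.
have zz : dot z z = dot l l * dot d d - (dot l d)^+2 by rewrite /z; ex; ring.
have hd := dot_pos d0; have hl := dot_pos l0.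
have zzp : 0 < dot z z by rewrite zz ld expr0n /= subr0 mulr_gt0.
have z0 : z != 0 by apply/eqP => e; move: zzp; rewrite e dotx0 ltxx.
have [[k [k0 ek]]|[k [k0 ek]]] := uniq z z0 (full _ zl) zl.
  by move: zd; rewrite ek dotZ => /eqP; rewrite mulf_eq0 (negbTE k0) /= => /eqP h; move: hd; rewrite h ltxx.
set y := d + z.
have yl : dot l y = 0 by rewrite dotC dotDl dotC ld dotC zl addr0.
have yd : dot y d = dot d d by rewrite dotDl zd addr0.
have y0 : y != 0 by apply/eqP => e; move: hd; rewrite -yd e dotC dotx0 ltxx.
have [[k1 [k10 ek1]]|[k2 [k20 ek2]]] := uniq y y0 (full _ yl) yl.
  have : dot y z = dot z z by rewrite dotDl (dotC d z) zd add0r.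
  by rewrite ek1 dotZ (dotC d z) zd mulr0 => h; move: zzp; rewrite -h ltxx.
have : k * dot y d = k2 * dot z d by rewrite ek ek2 !dotZ mulrCA.
rewrite yd zd mulr0 => /eqP; rewrite mulf_eq0 (negbTE k0) /= => /eqP h.
by move: hd; rewrite h ltxx.
Qed.

Lemma phi_id (a d z : 'rV[R]_3) : a 0 i0 + a 0 i1 + a 0 i2 = 0 ->
 dot (crs (hat d) a) (hat z) * D3 (hat a) d (hat (had (crs d z) d)) =
 dot (crs (hat d) a) (tau d z) * D3 (hat a) z (hat (had (crs d z) d)).
Proof.
move=> h; have ha : a 0 i2 = - a 0 i0 - a 0 i1 by rewrite -[RHS]addr0 -h; ring.
ex. rewrite ha. ring.
Qed.

Definition Hq (x : 'rV[R]_3) := x 0 i0 * x 0 i1 + x 0 i0 * x 0 i2 + x 0 i1 * x 0 i2.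

Lemma KZ (w x : 'rV[R]_3) k : dot w (hat (k *: x)) = k^+2 * dot w (hat x).
Proof. ex; ring. Qed.
Lemma D3Z2 (e x g : 'rV[R]_3) k : D3 e (k *: x) g = k * D3 e x g.
Proof. ex; ring. Qed.

Lemma helper (l0 l1 l2 d0 d1 d2 x0 x1 x2 w0 w1 w2 : R) : l0 != 0 ->
  l0*d0 = 0 -> l1*d1 = 0 -> l2*d2 = 0 -> ~(d0 = 0 /\ d1 = 0) -> ~(d0 = 0 /\ d2 = 0) ->
  l0*x0+l1*x1+l2*x2 = 0 -> w0*(d1*d2)+w1*(d0*d2)+w2*(d0*d1) = 0 ->
  w0*(x1*x2)+w1*(x0*x2)+w2*(x0*x1) = 0.
Proof.
move=> l00 h0 h1 h2 n1 n2 hx hw.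
have d00 : d0 = 0 by move/eqP: h0; rewrite mulf_eq0 (negbTE l00) /= => /eqP.
have d10 : d1 != 0 by apply/eqP => h; apply: n1.
have d20 : d2 != 0 by apply/eqP => h; apply: n2.
have l10 : l1 = 0 by move/eqP: h1; rewrite mulf_eq0 (negbTE d10) orbF => /eqP.
have l20 : l2 = 0 by move/eqP: h2; rewrite mulf_eq0 (negbTE d20) orbF => /eqP.
have x00 : x0 = 0.
  move: hx; rewrite l10 l20 !mul0r !addr0 => /eqP; rewrite mulf_eq0 (negbTE l00) /=; exact/eqP.
have w00 : w0 = 0.
  move: hw; rewrite d00 !mul0r !mulr0 !addr0 => /eqP; rewrite !mulf_eq0 (negbTE d10) (negbTE d20) !orbF; exact/eqP.
rewrite x00 w00; ring.
Qed.

End S.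

Section S2.
Variable R : realType.
Ltac ex := rewrite /D3 /dot /crs /hat /had /tau /mkv ?mxE /=.

Lemma D3Z13 (x y g : 'rV[R]_3) k k' : D3 (k *: x) y (k' *: g) = k * k' * D3 x y g.
Proof. ex; ring. Qed.
Lemma D3_dot (x y u : 'rV[R]_3) : D3 x y u = dot (crs x y) u.
Proof. ex; ring. Qed.
Lemma crsx0 (x : 'rV[R]_3) : crs x 0 = 0.
Proof. apply: row3P; ex; ring. Qed.

Lemma core (d l : 'rV[R]_3) :
  l != 0 -> dot l d = 0 ->
  ~ (d 0 i1 = 0 /\ d 0 i2 = 0) -> ~ (d 0 i0 = 0 /\ d 0 i2 = 0) -> ~ (d 0 i0 = 0 /\ d 0 i1 = 0) ->
  exists g : 'rV[R]_3, g != 0 /\ Hq g = 0 /\ forall e f w : 'rV[R]_3,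
   e 0 i0 != 0 -> e 0 i1 != 0 -> e 0 i2 != 0 -> Hq e = 0 -> ~ proj_eq d e ->
   dot w (hat d) = 0 -> dot w (hat e) = 0 ->
   f != 0 -> dot w (hat f) = 0 -> dot l f = 0 -> ~ proj_eq d f ->
   (forall x, x != 0 -> dot w (hat x) = 0 -> dot l x = 0 -> proj_eq d x \/ proj_eq f x) ->
   D3 e f g = 0.
Proof.
move=> l0 ld n12 n02 n01.
have d0 : d != 0.
  apply/eqP => dz; apply: n12; by rewrite dz mxE mxE.
set g := hat (had l d).
have Hg : Hq g = 0.
  have -> : Hq g = (l 0 i0 * d 0 i0) * (l 0 i1 * d 0 i1) * (l 0 i2 * d 0 i2) * dot l d.
    by rewrite /Hq /g; ex; ring.
  by rewrite ld mulr0.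
case: (eqVneq g 0) => g0.
  exists (mkv 1 0 0); split.
    apply/eqP => h; have := congr1 (fun m : 'rV[R]_3 => m 0 i0) h.
    by rewrite /mkv !mxE /= => /eqP; rewrite oner_eq0.
  split; first by rewrite /Hq /mkv !mxE /=; ring.
  move=> e f w _ _ _ _ _ Kd _ _ _ _ _ uniq; exfalso.
  apply: (line_contra d0 l0 ld uniq) => x lx.
  have gE : forall i, g 0 i = 0 by move=> i; rewrite g0 mxE.
  have m12 := gE i0; have m02 := gE i1; have m01 := gE i2.
  move: m12 m02 m01; rewrite /g; ex => m12 m02 m01.
  move: ld lx Kd; ex => ld lx Kd.
  have sq : forall u v t : R, u * v = 0 -> u * t = 0 -> u + v + t = 0 -> u = 0.
    move=> u v t h1 h2 h3.
    have h : u * u = 0.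
      have -> : u * u = - (u * v) - (u * t) + u * (u + v + t) by ring.
      by rewrite h1 h2 h3; ring.
    by move/eqP: h; rewrite mulf_eq0 orbb => /eqP.
  have M0 : l 0 i0 * d 0 i0 = 0 by apply: (sq _ (l 0 i1 * d 0 i1) (l 0 i2 * d 0 i2)); [exact m01|exact m02|lra].
  have M1 : l 0 i1 * d 0 i1 = 0 by apply: (sq _ (l 0 i0 * d 0 i0) (l 0 i2 * d 0 i2)); [rewrite mulrC; exact m01|exact m12|lra].
  have M2 : l 0 i2 * d 0 i2 = 0 by apply: (sq _ (l 0 i0 * d 0 i0) (l 0 i1 * d 0 i1)); [rewrite mulrC; exact m02|rewrite mulrC; exact m12|lra].
  have [L0|L0] := boolP (l 0 i0 != 0).
    exact: (helper L0 M0 M1 M2 n01 n02 lx Kd).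
  have [L1|L1] := boolP (l 0 i1 != 0).
    have := (@helper R (l 0 i1) (l 0 i0) (l 0 i2) (d 0 i1) (d 0 i0) (d 0 i2) (x 0 i1) (x 0 i0) (x 0 i2)
       (w 0 i1) (w 0 i0) (w 0 i2) L1 M1 M0 M2).
    move=> /(_ _ _ _ _) h.
    have := h (fun '(conj a b) => n01 (conj b a)) n12.
    move=> /(_ _ _) h'. 
    have h'' := h' ltac:(by rewrite -lx; ring) ltac:(by rewrite -Kd; ring).
    by rewrite -h''; ring.
  have L2 : l 0 i2 != 0.
    move/negbNE/eqP: L0 => L0; move/negbNE/eqP: L1 => L1.
    apply/negP => /eqP L2; move: l0 => /negP; apply; apply/eqP; apply: row3P;
    by rewrite mxE.
  have := (@helper R (l 0 i2) (l 0 i0) (l 0 i1) (d 0 i2) (d 0 i0) (d 0 i1) (x 0 i2) (x 0 i0) (x 0 i1)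
       (w 0 i2) (w 0 i0) (w 0 i1) L2 M2 M0 M1).
  move=> /(_ _ _) h.
  have := h (fun '(conj a b) => n02 (conj b a)) (fun '(conj a b) => n12 (conj b a)).
  move=> /(_ _ _) h'.
  have h'' := h' ltac:(by rewrite -lx; ring) ltac:(by rewrite -Kd; ring).
  by rewrite -h''; ring.

exists g; split; first exact g0. split; first exact Hg.
move=> e f w e0 e1 e2 He nde Kd Ke f0 Kf lf ndf uniq.
have dd0 := dot_pos d0; have ll0 := dot_pos l0.
set z := crs l d.
have hL : crs d z = dot d d *: l.
  by rewrite /z bac (dotC d l) ld scale0r subr0.
set a := hat e.
have ha : a 0 i0 + a 0 i1 + a 0 i2 = 0.
  by move: He; rewrite /Hq /a; ex => He; lra.
have Phi := phi_id d z ha.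
have hg' : hat (had (crs d z) d) = (dot d d)^+2 *: g.
  by rewrite hL /g; apply: row3P; ex; ring.
have ha2 : hat a = (e 0 i0 * e 0 i1 * e 0 i2) *: e.
  by apply: row3P; rewrite /a; ex; ring.
rewrite hg' ha2 !D3Z13 in Phi.
set v := crs (hat d) a.
rewrite -/v in Phi.
have wv : dot v v *: w = dot v w *: v.
  have c0 : crs w v = 0 by rewrite /v bac Ke Kd !scale0r subr0.
  have := bac v w v; rewrite c0 crsx0 => /eqP; rewrite eq_sym subr_eq0 => /eqP.
  by rewrite (dotC v w).
have E1 : dot v v * dot w (hat z) = dot v w * dot v (hat z) by rewrite -!dotZ wv.
have E2 : dot v v * dot w (tau d z) = dot v w * dot v (tau d z) by rewrite -!dotZ wv.
have v0 : v != 0.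
  apply/eqP => vz.
  have vE : forall i, v 0 i = 0 by move=> i; rewrite vz mxE.
  have V0 := vE i0; have V1 := vE i1; have V2 := vE i2.
  move: V0 V1 V2; rewrite /v /a; ex => V0 V1 V2.
  have [D0|D0] := eqVneq (d 0 i0) 0.
    have D1 : d 0 i1 != 0 by apply/eqP => h; apply: n01.
    have D2 : d 0 i2 != 0 by apply/eqP => h; apply: n02.
    have : d 0 i1 * d 0 i2 * (e 0 i0 * e 0 i1) = 0.
      by move: V1; rewrite D0 => V1; lra.
    by move/eqP; rewrite !mulf_eq0 (negbTE D1) (negbTE D2) (negbTE e0) (negbTE e1).
  have [D1|D1] := eqVneq (d 0 i1) 0.
    have D2 : d 0 i2 != 0 by apply/eqP => h; apply: n12.
    have : d 0 i0 * d 0 i2 * (e 0 i1 * e 0 i2) = 0.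
      by move: V2; rewrite D1 => V2; lra.
    by move/eqP; rewrite !mulf_eq0 (negbTE D0) (negbTE D2) (negbTE e1) (negbTE e2).
  have [D2|D2] := eqVneq (d 0 i2) 0.
    have : d 0 i0 * d 0 i1 * (e 0 i0 * e 0 i2) = 0.
      by move: V0; rewrite D2 => V0; lra.
    by move/eqP; rewrite !mulf_eq0 (negbTE D0) (negbTE D1) (negbTE e0) (negbTE e2).
  have h2 : d 0 i1 * e 0 i0 = d 0 i0 * e 0 i1.
    have : d 0 i2 * e 0 i2 * (d 0 i1 * e 0 i0 - d 0 i0 * e 0 i1) = 0 by lra.
    by move/eqP; rewrite !mulf_eq0 (negbTE D2) (negbTE e2) /= subr_eq0 => /eqP.
  have h3 : d 0 i2 * e 0 i0 = d 0 i0 * e 0 i2.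
    have : d 0 i1 * e 0 i1 * (d 0 i2 * e 0 i0 - d 0 i0 * e 0 i2) = 0 by lra.
    by move/eqP; rewrite !mulf_eq0 (negbTE D1) (negbTE e1) /= subr_eq0 => /eqP.
  apply: nde; exists (e 0 i0 / d 0 i0); split; first by rewrite mulf_neq0 ?invr_neq0.
  apply: row3P; rewrite mxE.
  - by rewrite mulrAC -mulrA divff // mulr1.
  - by rewrite -[e 0 i1](mulKf D0) -h2; ring.
  - by rewrite -[e 0 i2](mulKf D0) -h3; ring.
have p0 : e 0 i0 * e 0 i1 * e 0 i2 != 0 by rewrite !mulf_neq0.
have vv0 := dot_pos v0.
have Psi : dot w (hat z) * D3 e d g = dot w (tau d z) * D3 e z g.
  have N0 : dot v v * (e 0 i0 * e 0 i1 * e 0 i2 * (dot d d)^+2) != 0.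
    by apply: mulf_neq0; [exact: lt0r_neq0 | apply: mulf_neq0 => //; apply: expf_neq0; exact: lt0r_neq0].
  apply: (mulfI N0).
  transitivity ((dot v v * dot w (hat z)) * (e 0 i0 * e 0 i1 * e 0 i2 * (dot d d)^+2 * D3 e d g)); first ring.
  rewrite E1 -mulrA Phi mulrA -E2; ring.
set LL := dot (crs d z) (crs d z).
have LLp : 0 < LL by rewrite /LL hL dotZ dotC dotZ !mulr_gt0.
have LLn0 : LL != 0 by exact: lt0r_neq0.
have dec : forall x, dot l x = 0 ->
    LL *: x = D3 x z (crs d z) *: d + D3 d x (crs d z) *: z.
  move=> x lx; have c := cramer d z (crs d z) x.
  have t1 : D3 d z x = 0 by rewrite D3_dot hL dotZ lx mulr0.
  by rewrite t1 scale0r addr0 (D3_dot d z (crs d z)) in c.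
set T := dot w (tau d z) in Psi *; set Kz := dot w (hat z) in Psi *.
have Kdec : forall x, dot l x = 0 -> LL^+2 * dot w (hat x) =
    D3 d x (crs d z) * (D3 x z (crs d z) * T + D3 d x (crs d z) * Kz).
  move=> x lx; rewrite -KZ (dec x lx) Kcomb Kd mulr0 add0r; rewrite /T /Kz; ring.
clearbody T Kz.
have hf := dec f lf; have kf := Kdec f lf.
have Gam : LL * D3 e f g = D3 f z (crs d z) * D3 e d g + D3 d f (crs d z) * D3 e z g.
  by rewrite -D3Z2 (dec f lf) D3lin2.
move: hf kf Gam; move: (D3 f z (crs d z)) (D3 d f (crs d z)) => s t hf kf Gam.
move: kf; rewrite Kf mulr0 => /esym/eqP; rewrite mulf_eq0 => /orP [/eqP t0 | /eqP star].
  exfalso; apply: ndf.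
  rewrite t0 scale0r addr0 in hf.
  have s0 : s != 0.
    apply/eqP => s0; move: hf; rewrite s0 scale0r => /eqP; rewrite scaler_eq0 (negbTE LLn0) /=.
    by rewrite (negbTE f0).
  exists (s / LL); split; first by rewrite mulf_neq0 ?invr_neq0.
  apply: (scalerI LLn0); rewrite hf scalerA; congr (_ *: _).
  by rewrite mulrCA divff // mulr1.
have [Kz0|Kz0] := eqVneq Kz 0.
  have [T0|T0] := eqVneq T 0.
    exfalso; apply: (line_contra d0 l0 ld uniq) => x lx.
    have := Kdec x lx; rewrite Kz0 T0 !mulr0 addr0 mulr0 => /eqP.
    by rewrite mulf_eq0 expf_eq0 /= (negbTE LLn0) /= => /eqP.
  have : T * (LL * D3 e f g) = 0.
    rewrite Gam mulrDr (mulrCA T t) -Psi.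
    transitivity (D3 e d g * (s * T + t * Kz)); first ring.
    by rewrite star mulr0.
  by move/eqP; rewrite !mulf_eq0 (negbTE T0) (negbTE LLn0) /= => /eqP.
have : Kz * (LL * D3 e f g) = 0.
  rewrite Gam mulrDr (mulrCA Kz s) Psi.
  transitivity (D3 e z g * (s * T + t * Kz)); first ring.
  by rewrite star mulr0.
by move/eqP; rewrite !mulf_eq0 (negbTE Kz0) (negbTE LLn0) /= => /eqP.
Qed.
End S2.

Section S3.
Variable R : realType.
Ltac ex := rewrite /D3 /dot /crs /hat /had /tau /mkv ?mxE /=.
Implicit Types (x y z u v X Y Z : 'rV[R]_3) (M : 'M[R]_3).

Lemma mxdot x y : (x *m y^T) 0 0 = dot x y.
Proof. by rewrite mxE sum3 !mxE. Qed.

Lemma dotDr x y u : dot u (x + y) = dot u x + dot u y.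
Proof. ex; ring. Qed.
Lemma dotZr x y k : dot x (k *: y) = k * dot x y.
Proof. ex; ring. Qed.
Lemma dot0l x : dot 0 x = 0.
Proof. ex; ring. Qed.

Lemma mk3E0 x y z j : mk3 x y z i0 j = x 0 j.
Proof. rewrite /mk3 (_ : i0 = @lshift 1 (1+1) ord0); first exact: col_mxEu. exact: ord_inj. Qed.
Lemma mk3E1 x y z j : mk3 x y z i1 j = y 0 j.
Proof. rewrite /mk3 (_ : i1 = @rshift 1 (1+1) (@lshift 1 1 ord0)); last exact: ord_inj.
 rewrite (@col_mxEd _ 1 (1+1) 3). exact: col_mxEu. Qed.
Lemma mk3E2 x y z j : mk3 x y z i2 j = z 0 j.
Proof. rewrite /mk3 (_ : i2 = @rshift 1 (1+1) (@rshift 1 1 ord0)); last exact: ord_inj.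
 rewrite (@col_mxEd _ 1 (1+1) 3). exact: col_mxEd. Qed.

Lemma mulmk3 v X Y Z : v *m mk3 X Y Z = v 0 i0 *: X + v 0 i1 *: Y + v 0 i2 *: Z.
Proof. by apply/rowP => j; rewrite !mxE sum3 mk3E0 mk3E1 mk3E2. Qed.

Lemma detmk3 x y z : \det (mk3 x y z) = D3 x y z.
Proof. rewrite det3 !mk3E0 !mk3E1 !mk3E2; ex; ring. Qed.

Lemma mk3mul x y z M : mk3 x y z *m M = mk3 (x *m M) (y *m M) (z *m M).
Proof. by rewrite /mk3 (@mul_col_mx _ 1 (1+1) 3 3) mul_col_mx. Qed.

Lemma symbf M x y : M^T = M -> dot (x *m M) y = dot (y *m M) x.
Proof.
move=> hM; rewrite -!mxdot.
have -> : (x *m M *m y^T) 0 0 = ((x *m M *m y^T)^T) 0 0 by rewrite [in RHS]mxE.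
by rewrite !trmx_mul trmxK hM mulmxA.
Qed.

Lemma qcomb M (a b c : R) U V W : M^T = M ->
  dot ((a *: U + b *: V + c *: W) *m M) (a *: U + b *: V + c *: W) =
  a^+2 * dot (U *m M) U + b^+2 * dot (V *m M) V + c^+2 * dot (W *m M) W
  + 2 * a * b * dot (U *m M) V + 2 * a * c * dot (U *m M) W + 2 * b * c * dot (V *m M) W.
Proof.
move=> hM; rewrite !mulmxDl -!scalemxAl !dotDl !dotDr !dotZ !dotZr.
rewrite (symbf V U hM) (symbf W U hM) (symbf W V hM); ring.
Qed.

Lemma lcomb (a b c : R) U V W l :
  dot (a *: U + b *: V + c *: W) l = a * dot U l + b * dot V l + c * dot W l.
Proof. by rewrite !dotDl !dotZ. Qed.

Lemma crs0_peq x y : x != 0 -> crs x y = 0 -> y = (dot x y / dot x x) *: x.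
Proof.
move=> x0 h.
have h' : crs y x = 0.
  apply: row3P; move: (congr1 (fun m : 'rV[R]_3 => m 0 i0) h) (congr1 (fun m : 'rV[R]_3 => m 0 i1) h)
     (congr1 (fun m : 'rV[R]_3 => m 0 i2) h); ex => h0 h1 h2; lra.
have := bac x y x; rewrite h' crsx0 => /eqP; rewrite eq_sym subr_eq0 => /eqP e.
have xx := lt0r_neq0 (dot_pos x0).
by rewrite mulrC -scalerA -e scalerA mulVf // scale1r.
Qed.

End S3.

Section S4.
Variable R : realType.
Ltac ex := rewrite /D3 /dot /crs /hat /had /tau /mkv ?mxE /=.
Implicit Types (x y z u v X Y Z : 'rV[R]_3) (M : 'M[R]_3).

Lemma unit_inj M x : M \in unitmx -> x *m M = 0 -> x = 0.
Proof. by move=> hM h; rewrite -(mulmxK hM x) h mul0mx. Qed.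

Lemma pair_nz M X Y : M^T = M -> M \in unitmx -> X != 0 -> Y != 0 ->
  dot (X *m M) X = 0 -> dot (Y *m M) Y = 0 -> ~ proj_eq X Y -> dot (X *m M) Y != 0.
Proof.
move=> hM uM X0 Y0 qX qY npq; apply/negP => /eqP hXY.
have hYX : dot (Y *m M) X = 0 by rewrite symbf.
set n := crs X Y.
have n0 : n != 0.
  apply/eqP => h; apply: npq; have e := crs0_peq X0 h.
  exists (dot X Y / dot X X); split => //.
  apply/eqP => k0; move: e; rewrite k0 scale0r => e; by rewrite e eqxx in Y0.
have nn := dot_pos n0.
have cu : crs (X *m M) n = 0 by rewrite /n bac hXY qX !scale0r subr0.
have cv : crs (Y *m M) n = 0 by rewrite /n bac qY hYX !scale0r subr0.
have hu : dot n n *: (X *m M) = dot n (X *m M) *: n.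
  by have := bac n (X *m M) n; rewrite cu crsx0 => /eqP; rewrite eq_sym subr_eq0 => /eqP.
have hv : dot n n *: (Y *m M) = dot n (Y *m M) *: n.
  by have := bac n (Y *m M) n; rewrite cv crsx0 => /eqP; rewrite eq_sym subr_eq0 => /eqP.
have nnz := lt0r_neq0 nn.
have [nu0|nu0] := eqVneq (dot n (X *m M)) 0.
  move: hu; rewrite nu0 scale0r => /eqP; rewrite scaler_eq0 (negbTE nnz) /= => /eqP h.
  by move: X0; rewrite (unit_inj uM h) eqxx.
have key : (dot n (X *m M) *: Y - dot n (Y *m M) *: X) *m M = 0.
  apply: (scalerI nnz); rewrite scaler0 mulmxBl -!scalemxAl scalerBr !scalerA.
  rewrite (mulrC (dot n n)) [in X in _ - X](mulrC (dot n n)) -!scalerA hu hv !scalerA.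
  by rewrite mulrC subrr.
have := unit_inj uM key => /eqP; rewrite subr_eq0 => /eqP e.
apply: npq; exists (dot n (Y *m M) / dot n (X *m M)); split.
  rewrite mulf_neq0 ?invr_neq0 //; apply/eqP => h; move: e; rewrite h scale0r => /eqP.
  by rewrite scaler_eq0 (negbTE nu0) (negbTE Y0).
by rewrite mulrC -scalerA -e scalerA mulVf // scale1r.
Qed.
End S4.

Section S5.
Variable R : realType.
Ltac ex := rewrite /D3 /dot /crs /hat /had /tau /mkv ?mxE /=.
Implicit Types (x y z u v X Y Z : 'rV[R]_3) (M : 'M[R]_3).

Lemma qformE M x : qform M x = dot (x *m M) x.
Proof. by rewrite /qform mxdot. Qed.
Lemma onlineE l x : on_line l x <-> dot x l = 0.
Proof. by rewrite /on_line mxdot. Qed.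

Lemma qP M v U V W : M^T = M -> dot (U *m M) U = 0 -> dot (V *m M) V = 0 -> dot (W *m M) W = 0 ->
  dot ((v *m mk3 U V W) *m M) (v *m mk3 U V W) =
  2 * (v 0 i0 * v 0 i1 * dot (U *m M) V + v 0 i0 * v 0 i2 * dot (U *m M) W
       + v 0 i1 * v 0 i2 * dot (V *m M) W).
Proof. by move=> hM hU hV hW; rewrite mulmk3 qcomb // hU hV hW; ring. Qed.

Lemma bfZZ M a b X Y : dot ((a *: X) *m M) (b *: Y) = a * b * dot (X *m M) Y.
Proof. by rewrite -scalemxAl dotZ dotZr mulrA. Qed.

Lemma peq_of U X k : X != 0 -> X = k *: U -> proj_eq U X.
Proof.
move=> X0 e; exists k; split => //; apply/eqP => k0; by rewrite e k0 scale0r eqxx in X0.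
Qed.

End S5.
Ltac ex := rewrite /D3 /dot /crs /hat /had /tau /mkv ?mxE /=.

Unset Implicit Arguments.
Theorem fact2p1 (R : realType) (Mh : 'M[R]_3) (l A B C D : 'rV[R]_3) :
  nondeg_conic Mh -> l != 0 ->
  A != 0 -> B != 0 -> C != 0 -> D != 0 ->
  on_conic Mh A -> on_conic Mh B -> on_conic Mh C -> on_line l D ->
  ~ proj_eq A B -> ~ proj_eq A C -> ~ proj_eq B C ->
  ~ proj_eq A D -> ~ proj_eq B D -> ~ proj_eq C D ->
  exists G : 'rV[R]_3, G != 0 /\ on_conic Mh G /\
    forall (E F : 'rV[R]_3) (Me : 'M[R]_3),
      E != 0 -> on_conic Mh E ->
      ~ proj_eq A E -> ~ proj_eq B E -> ~ proj_eq C E -> ~ proj_eq D E ->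
      is_conic Me ->
      on_conic Me A -> on_conic Me B -> on_conic Me C -> on_conic Me D ->
      on_conic Me E ->
      F != 0 -> on_conic Me F -> on_line l F -> ~ proj_eq D F ->
      (forall P : 'rV[R]_3, P != 0 -> on_conic Me P -> on_line l P ->
         proj_eq D P \/ proj_eq F P) ->
      collinear3 E F G.
Proof.
move=> [[hMt _] hdet] l0 A0 B0 C0 D0 hA hB hC hD nAB nAC nBC nAD nBD nCD.
have uM : Mh \in unitmx by rewrite unitmxE unitfE.
rewrite /on_conic !qformE in hA hB hC; rewrite onlineE in hD.
set a := dot (B *m Mh) C; set b := dot (A *m Mh) C; set c := dot (A *m Mh) B.
have a0 : a != 0 by apply: pair_nz.
have b0 : b != 0 by apply: pair_nz.
have c0 : c != 0 by apply: pair_nz.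
set P := mk3 (a *: A) (b *: B) (c *: C).
have qA' : dot ((a *: A) *m Mh) (a *: A) = 0 by rewrite bfZZ hA mulr0.
have qB' : dot ((b *: B) *m Mh) (b *: B) = 0 by rewrite bfZZ hB mulr0.
have qC' : dot ((c *: C) *m Mh) (c *: C) = 0 by rewrite bfZZ hC mulr0.
have QH : forall v, dot ((v *m P) *m Mh) (v *m P) = 2 * (a * b * c) * Hq v.
  move=> v; rewrite qP // !bfZZ -/a -/b -/c /Hq; ring.
have uP : P \in unitmx.
  rewrite unitmxE unitfE; apply/negP => /det0P [v v0 vP].
  have EA : dot ((v *m P) *m Mh) A = 0 by rewrite vP mul0mx dot0l.
  have EB : dot ((v *m P) *m Mh) B = 0 by rewrite vP mul0mx dot0l.
  have EC : dot ((v *m P) *m Mh) C = 0 by rewrite vP mul0mx dot0l.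
  rewrite mulmk3 !mulmxDl -!scalemxAl !dotDl !dotZ in EA EB EC.
  rewrite hA (symbf B A hMt) (symbf C A hMt) -/b -/c in EA.
  rewrite hB (symbf C B hMt) -/a -/c in EB.
  rewrite hC -/a -/b in EC.
  have s12 : v 0 i1 + v 0 i2 = 0.
    have : b * c * (v 0 i1 + v 0 i2) = 0 by rewrite -EA; ring.
    by move/eqP; rewrite !mulf_eq0 (negbTE b0) (negbTE c0) /= => /eqP.
  have s02 : v 0 i0 + v 0 i2 = 0.
    have : a * c * (v 0 i0 + v 0 i2) = 0 by rewrite -EB; ring.
    by move/eqP; rewrite !mulf_eq0 (negbTE a0) (negbTE c0) /= => /eqP.
  have s01 : v 0 i0 + v 0 i1 = 0.
    have : a * b * (v 0 i0 + v 0 i1) = 0 by rewrite -EC; ring.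
    by move/eqP; rewrite !mulf_eq0 (negbTE a0) (negbTE b0) /= => /eqP.
  move: v0 => /eqP; apply; apply: row3P; rewrite mxE; lra.
set crd := fun X : 'rV[R]_3 => X *m invmx P.
have crdK : forall X, crd X *m P = X by move=> X; rewrite /crd mulmxKV.
have Kcrd : forall v, crd (v *m P) = v by move=> v; rewrite /crd mulmxK.
have crdZ : forall k X, crd (k *: X) = k *: crd X by move=> k X; rewrite /crd scalemxAl.
set lam := mkv (dot (a *: A) l) (dot (b *: B) l) (dot (c *: C) l).
have LH : forall v, dot (v *m P) l = dot lam v.
  by move=> v; rewrite mulmk3 lcomb /lam; ex; ring.
set d := crd D.
have hd : dot lam d = 0 by rewrite -LH crdK.
have lam0 : lam != 0.
  apply/eqP => h; move: (dot_pos l0); by rewrite -{1}(crdK l) LH h dot0l ltxx.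
have pcoord : forall v X, X = v *m P -> X != 0 ->
   [/\ (v 0 i1 = 0 /\ v 0 i2 = 0) -> proj_eq A X,
       (v 0 i0 = 0 /\ v 0 i2 = 0) -> proj_eq B X &
       (v 0 i0 = 0 /\ v 0 i1 = 0) -> proj_eq C X].
  move=> v X hX X0; split => -[h1 h2]; apply: (peq_of X0); rewrite hX mulmk3 h1 h2 !scale0r.
  - by rewrite !addr0 scalerA.
  - by rewrite addr0 add0r scalerA.
  - by rewrite !add0r scalerA.
have [pA pB pC] := pcoord d D (esym (crdK D)) D0.
have [g [g0 [Hg hg]]] := core lam0 hd (fun h => nAD (pA h)) (fun h => nBD (pB h)) (fun h => nCD (pC h)).
exists (g *m P); split.
  by apply/eqP => h; move: g0; rewrite (unit_inj uP h) eqxx.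
split; first by rewrite /on_conic qformE QH Hg mulr0.
move=> E F Me E0 hE nAE nBE nCE nDE [hMe _] hAe hBe hCe hDe hEe F0 hFe hF nDF uniq.
rewrite /on_conic !qformE in hAe hBe hCe hDe hEe hFe hE.
rewrite onlineE in hF.
set w := mkv (dot ((b *: B) *m Me) (c *: C)) (dot ((a *: A) *m Me) (c *: C)) (dot ((a *: A) *m Me) (b *: B)).
have qA'' : dot ((a *: A) *m Me) (a *: A) = 0 by rewrite bfZZ hAe mulr0.
have qB'' : dot ((b *: B) *m Me) (b *: B) = 0 by rewrite bfZZ hBe mulr0.
have qC'' : dot ((c *: C) *m Me) (c *: C) = 0 by rewrite bfZZ hCe mulr0.
have QE : forall v, dot ((v *m P) *m Me) (v *m P) = 2 * dot w (hat v).
  by move=> v; rewrite qP // /w; ex; ring.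
have two0 : (2 : R) != 0 by rewrite pnatr_eq0.
have QE0 : forall v, dot ((v *m P) *m Me) (v *m P) = 0 -> dot w (hat v) = 0.
  by move=> v; rewrite QE => /eqP; rewrite mulf_eq0 (negbTE two0) /= => /eqP.
set e := crd E; set f := crd F.
have He : Hq e = 0.
  move: hE; rewrite -(crdK E) QH => /eqP; rewrite !mulf_eq0 (negbTE two0) (negbTE a0) (negbTE b0) (negbTE c0) /=.
  by move/eqP.
have [eA eB eC] := pcoord e E (esym (crdK E)) E0.
have e0 : e 0 i0 != 0.
  apply/eqP => h; move: He; rewrite /Hq h !mul0r !add0r => /eqP; rewrite mulf_eq0 => /orP [] /eqP h'.
  - by apply: nCE; apply: eC.
  - by apply: nBE; apply: eB.
have e1 : e 0 i1 != 0.
  apply/eqP => h; move: He; rewrite /Hq h !mul0r !mulr0 !add0r addr0 => /eqP; rewrite mulf_eq0 => /orP [] /eqP h'.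
  - by apply: nCE; apply: eC.
  - by apply: nAE; apply: eA.
have e2 : e 0 i2 != 0.
  apply/eqP => h; move: He; rewrite /Hq h !mulr0 !addr0 => /eqP; rewrite mulf_eq0 => /orP [] /eqP h'.
  - by apply: nBE; apply: eB.
  - by apply: nAE; apply: eA.
have peq_back : forall X Y, proj_eq (crd X) (crd Y) -> proj_eq X Y.
  move=> X Y [k [k0 h]]; exists k; split => //.
  by rewrite -(crdK Y) h -scalemxAl crdK.
have peq_fwd : forall X Y, proj_eq X Y -> proj_eq (crd X) (crd Y).
  by move=> X Y [k [k0 h]]; exists k; split => //; rewrite h crdZ.
have f0 : f != 0.
  by apply/eqP => h; move: F0; rewrite -(crdK F) -/f h mul0mx eqxx.
have uniq' : forall x, x != 0 -> dot w (hat x) = 0 -> dot lam x = 0 -> proj_eq d x \/ proj_eq f x.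
  move=> x x0 Kx lx.
  have X0 : x *m P != 0 by apply/eqP => h; move: x0; rewrite (unit_inj uP h) eqxx.
  have hX : on_conic Me (x *m P) by rewrite /on_conic qformE QE Kx mulr0.
  have lX : on_line l (x *m P) by rewrite onlineE LH.
  by case: (uniq _ X0 hX lX) => h; [left|right]; have := peq_fwd _ _ h; rewrite Kcrd.
have hD3 := hg e f w e0 e1 e2 He (fun h => nDE (peq_back _ _ h))
   (QE0 d ltac:(by rewrite /d crdK)) (QE0 e ltac:(by rewrite /e crdK)) f0
   (QE0 f ltac:(by rewrite /f crdK)) ltac:(by rewrite -LH /f crdK) (fun h => nDF (peq_back _ _ h)) uniq'.
rewrite /collinear3 -(crdK E) -(crdK F).
have -> : col_mx (crd E *m P) (col_mx (crd F *m P) (g *m P)) = mk3 (crd E) (crd F) g *m P.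
  by rewrite mk3mul.
by rewrite det_mulmx detmk3 hD3 mul0r.
Qed.
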